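(* If $R\le c/\delta$, then for every $n\ge 1$ we have $B^d_n+1\le B^s_n$, and the pair $\phi_{n+1}(x)=(a^s_{n+1}(x),a^d_n(x))$ satisfies, for $x\ge 0$: $\phi_{n+1}(x)=(l,1)$ if $0\le x\le B^d_n$; $\phi_{n+1}(x)=(l,0)$ if $B^d_n<x\le B^s_n$; $\phi_{n+1}(x)=(h,0)$ if $x>B^s_n$.
   Context: Parameters: $\lambda>0$, $0<\mu_l<\mu_h$, $\delta=\mu_h-\mu_l$, $R\ge 0$, $c>0$, and $h:\{0,1,2,\dots\}\to\mathbb{R}$ nondecreasing and convex with $h(0)=0$; the rates are normalized so that $\lambda+\mu_h+\beta=1$ for a discount rate $\beta>0$. Finite-horizon value functions on $S=\{0,1,2,\dots\}\times\{0,1\}$: $v_0\equiv 0$ and for $n\ge 0$: $v_{n+1}(0,0)=\lambda v_n(0,1)+\mu_h v_n(0,0)$; $v_{n+1}(x,0)=-h(x)+\lambda v_n(x,1)+\mu_l v_n(x-1,0)+\max\{\delta v_n(x,0),-c+\delta v_n(x-1,0)\}$ for $x\ge1$; $v_{n+1}(x,1)=\max\{R+v_{n+1}(x+1,0),v_{n+1}(x,0)\}$ for $x\ge 0$. Define $\Delta_n(x,i)=v_n(x,i)-v_n(x+1,i)$. Optimal decisions: admission in state $(x,1)$ with $n\ge1$ steps remaining: $a^d_{n}(x)=1$ if $\Delta_{n}(x,0)\le R$, else $0$; service rate in state $(x,0)$ with $n+1$ steps remaining: $a^s_{n+1}(0)=l$, and for $x>0$, $a^s_{n+1}(x)=l$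 if $\Delta_n(x-1,0)\le c/\delta$, else $h$. Threshold function: $T_f(\theta)=\sup\{k\ge0: f(k)\le\theta\}$ with $\sup\emptyset=-1$ ($+\infty$ allowed). Thresholds: $B^s_n=1+T_{\Delta_n(\cdot,0)}(c/\delta)$ and $B^d_n=T_{\Delta_n(\cdot,0)}(R)$. *)

(* Defs.v *)
From Stdlib Require Import Reals ZArith.
Open Scope R_scope.

(* Parameters passed explicitly: lam, mul, muh, Rw (reward R), c, h.
   delta = muh - mul. *)

(* v0 lam mul muh Rw c h n x  =  v_n(x,0). *)
Fixpoint v0 (lam mul muh Rw c : R) (h : nat -> R) (n : nat) : nat -> R :=
  match n with
  | O => fun _ => 0
  | S m =>
      let w := v0 lam mul muh Rw c h m in
      let w1 := fun x : nat =>
        match m with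
        | O => 0
        | S _ => Rmax (Rw + w (S x)) (w x)
        end in
      fun x =>
        match x with
        | O => lam * w1 O + muh * w O
        | S x' => - h x + lam * w1 x + mul * w x'
                  + Rmax ((muh - mul) * w x) (- c + (muh - mul) * w x')
        end
  end.

(* v n (x,i), i = false for 0, true for 1. *)
Definition v (lam mul muh Rw c : R) (h : nat -> R) (n x : nat) (i : bool) : R :=
  if i then
    match n with
    | O => 0
    | S _ => Rmax (Rw + v0 lam mul muh Rw c h n (S x)) (v0 lam mul muh Rw c h n x)
    end
  else v0 lam mul muh Rw c h n x.

Definition Delta0 (lam mul muh Rw c : R) (h : nat -> R) (n x : nat) : R :=
  v lam mul muh Rw c h n x false - v lam mul muh Rw c h n (S x) false.

Inductive rate := low | high.

(* admission decision a^d_n(x): true = 1 (admit), false = 0 *)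
Definition adm (lam mul muh Rw c : R) (h : nat -> R) (n x : nat) : bool :=
  if Rle_dec (Delta0 lam mul muh Rw c h n x) Rw then true else false.

(* service decision a^s_{n+1}(x), given n *)
Definition serv (lam mul muh Rw c : R) (h : nat -> R) (n x : nat) : rate :=
  match x with
  | O => low
  | S x' => if Rle_dec (Delta0 lam mul muh Rw c h n x') (c / (muh - mul))
            then low else high
  end.

Inductive ext := Fin (z : Z) | PInf.

Definition ext_le (a b : ext) : Prop :=
  match a, b with
  | _, PInf => True
  | PInf, Fin _ => False
  | Fin x, Fin y => (x <= y)%Z
  end.

Definition ext_add1 (a : ext) : ext :=
  match a with Fin z => Fin (z + 1)%Z | PInf => PInf end.

Definition ext_of_nat (k : nat) : ext := Fin (Z.of_nat k).

(* is_threshold f th T : T = T_f(th) = sup {k >= 0 | f k <= th}, with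
   sup of the empty set = -1 and +infinity allowed; i.e. T is the least
   element of ext that is >= -1 and bounds every such k. *)
Definition is_threshold (f : nat -> R) (th : R) (T : ext) : Prop :=
  ext_le (Fin (-1)) T /\
  (forall k : nat, f k <= th -> ext_le (ext_of_nat k) T) /\
  (forall U : ext, ext_le (Fin (-1)) U ->
     (forall k : nat, f k <= th -> ext_le (ext_of_nat k) U) -> ext_le T U).

(* Main.v *)
Require Import Defs.
From Stdlib Require Import Reals ZArith Lra Lia Psatz.
Open Scope R_scope.

Definition conc (f : nat -> R) : Prop :=
  forall x, 0 <= f x - f (S x) <= f (S x) - f (S (S x)).

Definition wm (u : nat -> R) (x : nat) : R :=
  match x with O => u O | S x' => u x' end.

Lemma conc_ext f g : conc f -> (forall x, f x = g x) -> conc g.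
Proof. intros H E x. rewrite <- !E. apply H. Qed.

Lemma conc_plus f g : conc f -> conc g -> conc (fun x => f x + g x).
Proof. intros Hf Hg x. specialize (Hf x). specialize (Hg x). lra. Qed.

Lemma conc_scal a f : 0 <= a -> conc f -> conc (fun x => a * f x).
Proof.
  intros Ha Hf x. destruct (Hf x) as [H1 H2].
  split.
  - replace (a * f x - a * f (S x)) with (a * (f x - f (S x))) by ring.
    apply Rmult_le_pos; lra.
  - replace (a * f x - a * f (S x)) with (a * (f x - f (S x))) by ring.
    replace (a * f (S x) - a * f (S (S x))) with (a * (f (S x) - f (S (S x)))) by ring.
    apply Rmult_le_compat_l; lra.
Qed.

Lemma conc_wm u : conc u -> conc (wm u).
Proof.
  intros Hu x. destruct x as [|x]; simpl.
  - destruct (Hu 0%nat). lra.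
  - apply Hu.
Qed.

Ltac rmax_cases :=
  repeat match goal with
  | |- context [Rmax ?a ?b] =>
      let H := fresh in
      destruct (Rle_dec a b) as [H|H];
      [ rewrite (Rmax_right a b H) | rewrite (Rmax_left a b (Rlt_le _ _ (Rnot_le_lt _ _ H))) ]
  end.

Lemma conc_g (r : R) u : conc u -> conc (fun x => Rmax (r + u (S x)) (u x)).
Proof.
  intros Hu x. destruct (Hu x). destruct (Hu (S x)). destruct (Hu (S (S x))).
  simpl. rmax_cases; lra.
Qed.

Lemma conc_M (c : R) u : conc u -> conc (fun x => Rmax (u x) (- c + wm u x)).
Proof.
  intros Hu x. pose proof (conc_wm u Hu x) as W. simpl in W.
  destruct (Hu x). destruct (Hu (S x)).
  assert (E1 : wm u (S x) = u x) by reflexivity.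
  assert (E2 : wm u (S (S x)) = u (S x)) by reflexivity.
  rewrite E1, E2. rmax_cases; lra.
Qed.

Lemma conc_v0 lam mul muh Rw c h
  (Hlam : 0 < lam) (Hmul : 0 < mul) (Hmulh : mul < muh) (Hc : 0 < c)
  (Hh0 : h O = 0)
  (Hhmono : forall x : nat, h x <= h (S x))
  (Hhconv : forall x : nat, h (S x) - h x <= h (S (S x)) - h (S x)) :
  forall n, conc (v0 lam mul muh Rw c h n).
Proof.
  induction n as [|m IH].
  - intro x. simpl. lra.
  - set (w := v0 lam mul muh Rw c h m) in *.
    set (w1 := fun x : nat => match m with O => 0 | S _ => Rmax (Rw + w (S x)) (w x) end).
    assert (Hw1 : conc w1).
    { unfold w1. destruct m. intro x; lra. apply conc_g. exact IH. }
    assert (Hh : conc (fun x => - h x)).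
    { intro x. pose proof (Hhmono x). pose proof (Hhmono (S x)). pose proof (Hhconv x). lra. }
    set (d := muh - mul).
    assert (HM : conc (fun x => Rmax (d * w x) (- c + d * wm w x))).
    { apply conc_ext with (fun x => Rmax ((fun y => d * w y) x) (- c + wm (fun y => d * w y) x)).
      - apply conc_M. apply conc_scal. unfold d; lra. exact IH.
      - intro x. destruct x; reflexivity. }
    apply conc_ext with (fun x => ((- h x) + lam * w1 x) + mul * wm w x
                                 + Rmax (d * w x) (- c + d * wm w x)).
    { apply conc_plus; [apply conc_plus; [apply conc_plus|]|].
      exact Hh. apply conc_scal. lra. exact Hw1.
      apply conc_scal. lra. apply conc_wm. exact IH. exact HM. }
    intro x. destruct x as [|x].
    + simpl. fold w. rewrite Hh0. rewrite Rmax_left by lra.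
      unfold w1, d; destruct m; ring.
    + simpl. fold w. unfold w1, d; destruct m; ring.
Qed.

Lemma mono_of_conc f : conc f -> forall k l, (k <= l)%nat ->
  f k - f (S k) <= f l - f (S l).
Proof.
  intros Hf k l Hkl. induction Hkl. lra. pose proof (Hf m). lra.
Qed.

Lemma thr_down (f : nat -> R) th T :
  (forall k l, (k <= l)%nat -> f k <= f l) ->
  is_threshold f th T -> forall x, ext_le (ext_of_nat x) T -> f x <= th.
Proof.
  intros Hm [H1 [H2 H3]] x Hx.
  destruct (Rle_dec (f x) th) as [Hle|Hn]; [exact Hle|exfalso].
  assert (HU : ext_le T (Fin (Z.of_nat x - 1))).
  { apply H3. simpl. lia.
    intros k Hk. simpl. destruct (le_lt_dec x k) as [Hxk|Hxk].
    - pose proof (Hm _ _ Hxk). lra.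
    - lia. }
  destruct T; simpl in *; lia.
Qed.

Theorem proposition1
  (lam mul muh beta Rw c : R) (h : nat -> R)
  (Hlam : 0 < lam) (Hmul : 0 < mul) (Hmulh : mul < muh)
  (Hbeta : 0 < beta) (Hnorm : lam + muh + beta = 1)
  (HR : 0 <= Rw) (Hc : 0 < c)
  (Hh0 : h O = 0)
  (Hhmono : forall x : nat, h x <= h (S x))
  (Hhconv : forall x : nat, h (S x) - h x <= h (S (S x)) - h (S x))
  (HRc : Rw <= c / (muh - mul)) :
  forall (n : nat), (1 <= n)%nat ->
  forall Ts Bd : ext,
    is_threshold (Delta0 lam mul muh Rw c h n) (c / (muh - mul)) Ts ->
    is_threshold (Delta0 lam mul muh Rw c h n) Rw Bd ->
    let Bs := ext_add1 Ts in
    ext_le (ext_add1 Bd) Bs /\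
    (forall x : nat,
       (ext_le (ext_of_nat x) Bd ->
          serv lam mul muh Rw c h n x = low /\ adm lam mul muh Rw c h n x = true) /\
       (~ ext_le (ext_of_nat x) Bd -> ext_le (ext_of_nat x) Bs ->
          serv lam mul muh Rw c h n x = low /\ adm lam mul muh Rw c h n x = false) /\
       (~ ext_le (ext_of_nat x) Bs ->
          serv lam mul muh Rw c h n x = high /\ adm lam mul muh Rw c h n x = false)).
Proof.
  intros n _ Ts Bd HTs HBd Bs.
  set (f := Delta0 lam mul muh Rw c h n) in *.
  assert (Hm : forall k l, (k <= l)%nat -> f k <= f l).
  { intros k l Hkl. unfold f, Delta0, v.
    apply (mono_of_conc _ (conc_v0 lam mul muh Rw c h Hlam Hmul Hmulh Hc Hh0 Hhmono Hhconv n)).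
    exact Hkl. }
  set (k := c / (muh - mul)) in *.
  pose proof (thr_down f k Ts Hm HTs) as DTs.
  pose proof (thr_down f Rw Bd Hm HBd) as DBd.
  destruct HTs as [T1 [T2 T3]]. destruct HBd as [B1 [B2 B3]].
  assert (BT : ext_le Bd Ts).
  { apply B3. exact T1. intros j Hj. apply T2. lra. }
  assert (Hadm : forall x, adm lam mul muh Rw c h n x = true <-> f x <= Rw).
  { intro x. unfold adm. fold f. destruct (Rle_dec (f x) Rw); split; intro; try congruence; lra. }
  assert (Hserv : forall x, serv lam mul muh Rw c h n (S x) = low <-> f x <= k).
  { intro x. unfold serv. fold f. fold k. destruct (Rle_dec (f x) k); split; intro; try congruence; lra. }
  assert (Hadmf : forall x, ~ f x <= Rw -> adm lam mul muh Rw c h n x = false).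
  { intros x Hx. destruct (adm lam mul muh Rw c h n x) eqn:E; [|reflexivity].
    exfalso. apply Hx, Hadm, E. }
  assert (Hservh : forall x, ~ f x <= k -> serv lam mul muh Rw c h n (S x) = high).
  { intros x Hx. destruct (serv lam mul muh Rw c h n (S x)) eqn:E; [|reflexivity].
    exfalso. apply Hx, Hserv, E. }
  split.
  { unfold Bs. destruct Bd, Ts; simpl in *; try lia; tauto. }
  intro x. split; [|split].
  - intro Hx. split; [|apply Hadm; apply DBd; exact Hx].
    destruct x as [|x]; [reflexivity|].
    apply Hserv. pose proof (DBd _ Hx). pose proof (Hm x (S x) (le_S _ _ (le_n _))). lra.
  - intros Hx1 Hx2. split.
    + destruct x as [|x]; [reflexivity|]. apply Hserv. apply DTs.
      unfold Bs in Hx2. destruct Ts; simpl in *; lia.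
    + apply Hadmf. intro Hf. apply Hx1. apply B2. exact Hf.
  - intro Hx. destruct x as [|x].
    { exfalso. apply Hx. unfold Bs. destruct Ts; simpl in *; lia. }
    split.
    + apply Hservh. intro Hf. apply Hx. pose proof (T2 _ Hf).
      unfold Bs. destruct Ts; simpl in *; lia.
    + apply Hadmf. intro Hf. apply Hx. pose proof (B2 _ Hf).
      unfold Bs. destruct Ts, Bd; simpl in *; lia.
Qed.
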